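(* Let $\ell\ge1$. Let $c_i=(c_{i,0},\dots,c_{i,\ell_i-1})$ and $c_j=(c_{j,0},\dots,c_{j,\ell_j-1})$ be two distinct codewords of a binary prefix-free code with lengths $\ell_i\le\ell_j$, and let $y_i=\sum_{t=0}^{\ell_i-1}c_{i,t}x^t$ and $y_j=\sum_{t=0}^{\ell_j-1}c_{j,t}x^t$ in $F_2[x]$. Let $r_0\in F_2[[x]]$ be arbitrary, let $s\in F_2[x]$ have degree less than $\ell$, and define the shares $$Z_i\equiv r_0+s\,y_i\pmod{x^{\ell_i+\ell-1}},\qquad Z_j\equiv r_0+s\,y_j\pmod{x^{\ell_j+\ell-1}},$$ taken as polynomials of degree less than $\ell_i+\ell-1$ and $\ell_j+\ell-1$ respectively. Let $L_{i,j}$ be the largest integer with $x^{L_{i,j}}\mid (y_i-y_j)$. Then $L_{i,j}\le \ell_i-1$, and $s$ is the unique polynomial of degree less than $\ell$ satisfying $$s\,(y_i-y_j)\equiv Z_i-Z_j\pmod{x^{\ell_i+\ell-1}};$$ explicitly, $$s\equiv\frac{(Z_i-Z_j)/x^{L_{i,j}}}{(y_i-y_j)/x^{L_{i,j}}}\pmod{x^{\ell}},$$ where the denominator has nonzero constant term and the quotient means multiplication by its inverse in $F_2[x]/(x^\ell)$.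
   Context: A binary prefix-free code is a set of finite binary strings (codewords) none of which is a prefix of another. $F_2[[x]]$ denotes formal power series over $F_2$; reduction of a power series modulo $x^N$ means truncation to its terms of degree less than $N$. *)

(* Defs.v *)
From HB Require Import structures.
From mathcomp Require Import all_boot all_order all_algebra.
Set Implicit Arguments. Unset Strict Implicit. Unset Printing Implicit Defensive.
Import GRing.Theory.
Local Open Scope ring_scope.

Definition prefix_free (C : seq (seq bool)) : Prop :=
  forall a b, a \in C -> b \in C -> a != b -> ~~ prefix a b.

Definition cw_poly (c : seq bool) : {poly 'F_2} :=
  \poly_(t < size c) (nth false c t)%:R.

Definition pseries := nat -> 'F_2.

Definition ps_trunc (N : nat) (r : pseries) : {poly 'F_2} :=
  \poly_(k < N) r k.

Definition share (N : nat) (r0 : pseries) (s y : {poly 'F_2}) : {poly 'F_2} :=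
  ps_trunc N r0 + take_poly N (s * y).

(* Main.v *)
Require Import Defs.
From HB Require Import structures.
From mathcomp Require Import all_boot all_order all_algebra.
From mathcomp Require Import ring zify.
Import GRing.Theory.
Local Open Scope ring_scope.

Section Aux.
Variable F : fieldType.

Lemma dvdXnP n (p : {poly F}) :
  reflect (forall i, (i < n)%N -> p`_i = 0) ('X^n %| p).
Proof.
apply: (iffP (modp_eq0P _ _)); rewrite -Pdiv.IdomainMonic.take_poly_modp.
  by move=> h i hi; have := coef_take_poly n p i; rewrite hi h coef0 => <-.
move=> h; apply/polyP => i; rewrite coef_take_poly coef0.
by case: ifP => // /h.
Qed.

Lemma coprimeXnD k (D : {poly F}) : D`_0 != 0 -> coprimep ('X^k) D.
Proof.
move=> hD; apply: coprimep_expl; rewrite coprimep_sym.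
have -> : ('X : {poly F}) = 'X - 0%:P by rewrite subr0.
by rewrite coprimep_XsubC /root horner_coef0.
Qed.

Lemma Xn_dvd_mulD k (p D : {poly F}) : D`_0 != 0 -> 'X^k %| p * D -> 'X^k %| p.
Proof. by move=> hD; rewrite Gauss_dvdpl // coprimeXnD. Qed.

Lemma Xn_neq0 k : ('X^k : {poly F}) != 0.
Proof. by rewrite -size_poly_eq0 size_polyXn. Qed.

Lemma dvd_shift a L l (q : {poly F}) : (L + l <= a)%N ->
  'X^a %| q * 'X^L -> 'X^l %| q.
Proof.
move=> hle h; have hLa : (L <= a)%N by apply: leq_trans hle; exact: leq_addr.
move: h; rewrite -(subnK hLa) exprD dvdp_mul2r ?Xn_neq0 // => h.
apply: dvdp_trans h; apply: dvdp_exp2l; rewrite leq_subRL //.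
Qed.
End Aux.

Theorem mainTheorem6 (l : nat) (C : seq (seq bool)) (ci cj : seq bool)
  (r0 : pseries) (s : {poly 'F_2}) (L : nat) :
  (1 <= l)%N ->
  prefix_free C -> ci \in C -> cj \in C -> ci != cj ->
  (size ci <= size cj)%N ->
  (size s <= l)%N ->
  let yi := cw_poly ci in
  let yj := cw_poly cj in
  let Zi := share (size ci + l - 1) r0 s yi in
  let Zj := share (size cj + l - 1) r0 s yj in
  (* L is the largest integer with x^L | (yi - yj) *)
  'X^L %| (yi - yj) ->
  (forall m : nat, 'X^m %| (yi - yj) -> (m <= L)%N) ->
  [/\ (L <= size ci - 1)%N,
      (* s is the unique polynomial of degree < l solving the congruence *)
      'X^(size ci + l - 1) %| (s * (yi - yj) - (Zi - Zj)),
      (forall s' : {poly 'F_2}, (size s' <= l)%N ->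
         'X^(size ci + l - 1) %| (s' * (yi - yj) - (Zi - Zj)) -> s' = s) &
      (* explicit formula *)
      let D := (yi - yj) %/ 'X^L in
      let N := (Zi - Zj) %/ 'X^L in
      [/\ 'X^L %| (Zi - Zj), D`_0 != 0,
          exists u : {poly 'F_2}, 'X^l %| (D * u - 1) &
          forall u : {poly 'F_2}, 'X^l %| (D * u - 1) -> 'X^l %| (s - N * u)]].
Proof.
move=> hl pf hi hj hne hsz hs yi yj Zi Zj hL hmax.
have npre : ~~ prefix ci cj by apply: pf.
have [t ht hneq] : exists2 t, (t < size ci)%N & nth false ci t != nth false cj t.
  case: (boolP [exists t : 'I_(size ci), nth false ci t != nth false cj t]).
    by case/existsP => t ht; exists t.
  move=> /existsPn hall; case/negP: npre; rewrite prefixE; apply/eqP.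
  apply: (eq_from_nth (x0 := false)); first by rewrite size_takel.
  move=> i; rewrite size_takel // => hi'.
  rewrite nth_take //; have := hall (Ordinal hi'); rewrite negbK => /eqP ->.
  by [].
have hLt : (L <= t)%N.
  rewrite leqNgt; apply/negP => htL.
  move/dvdXnP: hL => /(_ t htL) /eqP; apply/negP.
  rewrite /yi /yj /cw_poly coefB !coef_poly ht (leq_trans ht hsz).
  by move: hneq; case: (nth false ci t); case: (nth false cj t).
have hL1 : (L <= size ci - 1)%N.
  by move: hLt ht; clear; lia.
set ni := (size ci + l - 1)%N.
have hLni : (L + l <= ni)%N.
  by rewrite /ni; move: hLt ht hl; clear; lia.
have hcong : 'X^ni %| s * (yi - yj) - (Zi - Zj).
  apply/dvdXnP => k hk.
  have hk2 : (k < size cj + l - 1)%N.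
    by move: hk hsz; clear; lia.
  have hk' : (k < size ci + l - 1)%N := hk.
  rewrite /Zi /Zj /share /ps_trunc !coefB !coefD !coef_take_poly !coef_poly hk' hk2.
  rewrite mulrBr coefB; ring.
have hD : yi - yj = (yi - yj) %/ 'X^L * 'X^L by rewrite divpK.
set D := (yi - yj) %/ 'X^L in hD.
have hD0 : D`_0 != 0.
  apply/negP => /eqP h0.
  have hX : 'X^1 %| D by apply/dvdXnP => i; case: i.
  have : 'X^(L.+1) %| yi - yj.
    by rewrite hD exprS; apply: dvdp_mul hX (dvdpp _).
  by move/hmax; rewrite ltnn.
have hZ : 'X^L %| Zi - Zj.
  have -> : Zi - Zj = s * (yi - yj) - (s * (yi - yj) - (Zi - Zj)) by ring.
  apply: dvdp_sub; first exact: dvdp_mull.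
  apply: dvdp_trans hcong; apply: dvdp_exp2l.
  by apply: leq_trans hLni; exact: leq_addr.
split => //.
- move=> s' hs' hc.
  have h1 : 'X^ni %| (s' - s) * D * 'X^L.
    rewrite -mulrA -hD.
    have -> : (s' - s) * (yi - yj) =
      (s' * (yi - yj) - (Zi - Zj)) - (s * (yi - yj) - (Zi - Zj)) by ring.
    exact: dvdp_sub.
  have h2 := @Xn_dvd_mulD ('F_2 : fieldType) _ _ _ hD0 (@dvd_shift ('F_2 : fieldType) _ _ _ _ hLni h1).
  apply/eqP; rewrite -subr_eq0; apply/eqP; apply: contraTeq h2 => hnz.
  apply/negP => /(dvdp_leq hnz); rewrite size_polyXn ltnNge; apply/negP; apply/negPn.
  apply: leq_trans (size_polyD _ _) _; rewrite size_polyN geq_max hs hs'.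
  by [].
- move=> D' N; split => //.
  + have /Bezout_eq1_coprimepP [[u v] /= huv] := @coprimeXnD ('F_2 : fieldType) l _ hD0.
    exists v; apply/dvdpP; exists (- u).
    have -> : D' * v - 1 = D' * v - (u * 'X^l + v * D') by rewrite huv.
    rewrite /D'; ring.
  + move=> u hu.
    have hZN : Zi - Zj = N * 'X^L by rewrite divpK.
    have h1 : 'X^ni %| (s * D - N) * 'X^L.
      have -> : (s * D - N) * 'X^L = s * (yi - yj) - (Zi - Zj).
        by rewrite hZN hD; ring.
      exact: hcong.
    have h2 := @dvd_shift ('F_2 : fieldType) _ _ _ _ hLni h1.
    have -> : s - N * u = - (s * (D * u - 1)) + u * (s * D - N) by ring.
    by apply: dvdp_add; [rewrite dvdpNr; exact: dvdp_mull | exact: dvdp_mull].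
Qed.
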